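(* With the notation of the context, let $i\in\{1,\dots,n\}$ and let $k$ be an integer with $n\leqslant k<\ell(P_i)$. Then $\mathrm{qpd}_{A_{n,m}}(L(i,k))=\mathrm{pd}_{A_{n,m}}(L(i,k))=2$.
   Context: Let $K$ be a field, $n\geqslant2$, $Q$ the cyclic quiver with vertices $1,\dots,n$ and arrows $\alpha_i:i\to i+1$ ($1\leqslant i\leqslant n-1$), $\alpha_n:n\to1$, paths composed right to left. Let $\rho_1=\alpha_n\cdots\alpha_1$ and $\rho_i=\alpha_{i-1}\cdots\alpha_1\alpha_n\cdots\alpha_i$ for $2\leqslant i\leqslant n$. Fix $1\leqslant m\leqslant n$ and $\Delta=\{\lambda_1<\cdots<\lambda_m\}\subseteq\{1,\dots,n\}$, and let $A_{n,m}=KQ/\langle\rho_\lambda:\lambda\in\Delta\rangle$, with Jacobson radical $J$. Modules are finitely generated left modules. $P_i=A_{n,m}e_i$ for the idempotent $e_i$ at vertex $i$, $S_i=P_i/Je_i$, $\ell(M)=\min\{s\geqslant1:J^sM=0\}$ the Loewy length, and $L(i,k)$ the indecomposable module with top $S_i$ and Loewy length $k$ (namely $P_i/J^kP_i$). Complexes are indexed homologically; $\sup X_\bullet=\sup\{i:X_i\neq0\}$, $\inf X_\bullet=\inf\{i:X_i\ne0\}$, $\mathrm{hsup}\,X_\bullet=\sup\{i:H_i(X_\bullet)\neq0\}$. A quasi-projective resolution of $M$ is a complex $P_\bullet$ of projective modules with $\inf P_\bullet>-\infty$ such that for every $j\geqslant\inf P_\bullet$ there is $n_j\geqslant0$ with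 $H_j(P_\bullet)\cong M^{n_j}$, not all $n_j$ zero; finite if $\sup P_\bullet<\infty$. For $M\ne0$, $\mathrm{qpd}\,M=\inf\{\sup P_\bullet-\mathrm{hsup}\,P_\bullet\}$ over finite quasi-projective resolutions ($\infty$ if none). *)

(* Defs.v *)
From HB Require Import structures.
From mathcomp Require Import all_boot all_order all_algebra.
Set Implicit Arguments. Unset Strict Implicit. Unset Printing Implicit Defensive.
Import GRing.Theory.
Local Open Scope ring_scope.

(* Vertices 1..n of the paper are 'I_n (vertex v+1 of the paper is v : 'I_n).
   Arrow alpha_v : v -> ordS v.  Row-vector convention: an element a of the
   algebra acts on v : 'rV_N as  v *m (mat a),  so mat (a b) = mat b *m mat a. *)

(* A finite-dimensional K-vector space K^rdim with matrices for the generators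
   e_v (vertex idempotents) and alpha_v (arrows) of the path algebra. *)
Record rep (K : fieldType) (n : nat) := Rep {
  rdim : nat;
  re : 'I_n -> 'M[K]_rdim;
  ra : 'I_n -> 'M[K]_rdim }.

Section Defs.
Variables (K : fieldType) (n : nat) (Delta : {set 'I_n}).
Implicit Types (M N P : rep K n).

Definition vtx (v : 'I_n) (t : nat) : 'I_n := iter t (@ordS n) v.

(* matrix of the path alpha_{v+t-1} ... alpha_{v+1} alpha_v (length t, from v) *)
Fixpoint pathm M (v : 'I_n) (t : nat) : 'M[K]_(rdim M) :=
  match t with
  | 0 => 1%:M
  | t'.+1 => ra M v *m pathm M (ordS v) t'
  end.

(* M is a left module over A_{n,m} = KQ / < rho_lambda : lambda in Delta >,
   i.e. a representation of the generators satisfying the defining relations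
   of the path algebra KQ and the relations rho_lambda = 0. *)
Definition is_mod M : Prop :=
  [/\ forall v, re M v *m re M v = re M v,
      forall v w, v != w -> re M v *m re M w = 0,
      \sum_v re M v = 1%:M,
      forall v, ra M v = re M v *m ra M v *m re M (ordS v) &
      forall lam, lam \in Delta -> pathm M lam n = 0].

Definition is_hom M N (F : 'M[K]_(rdim M, rdim N)) : Prop :=
  forall v, re M v *m F = F *m re N v /\ ra M v *m F = F *m ra N v.

Definition is_iso M N : Prop :=
  exists F : 'M[K]_(rdim M, rdim N), is_hom F /\ row_free F /\ row_full F.

Definition projective P : Prop :=
  is_mod P /\
  forall M N (g : 'M[K]_(rdim M, rdim N)) (f : 'M[K]_(rdim P, rdim N)),
    is_mod M -> is_mod N -> is_hom g -> row_full g -> is_hom f ->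
    exists h : 'M[K]_(rdim P, rdim M), is_hom h /\ h *m g = f.

Definition mpow M (r : nat) : rep K n :=
  @Rep K n (\sum_(j < r) rdim M)
    (fun v => @mxdiag K r (fun _ => rdim M) (fun _ => re M v))
    (fun v => @mxdiag K r (fun _ => rdim M) (fun _ => ra M v)).

(* Loewy length: least s >= 1 with J^s M = 0; J^s is spanned by the paths of
   length >= s, so J^s M = 0 iff every path of length s acts by zero. *)
Definition loewy_length M (l : nat) : Prop :=
  [/\ (1 <= l)%N, forall v, pathm M v l = 0 &
      forall s, (1 <= s < l)%N -> exists v, pathm M v s != 0].

(* Bounded-below complexes of modules, indexed (after a shift, harmless for
   sup - hsup) by nat:  cd t : X_{t+1} -> X_t. *)
Record cplx := Cplx {
  cm : nat -> rep K n;
  cd : forall t : nat, 'M[K]_(rdim (cm t.+1), rdim (cm t)) }.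

Definition proj_complex (C : cplx) : Prop :=
  [/\ forall t, projective (cm C t),
      forall t, is_hom (cd C t) &
      forall t, cd C t.+1 *m cd C t = 0].

Definition cycles (C : cplx) (t : nat) : 'M[K]_(rdim (cm C t)) :=
  match t as u return 'M[K]_(rdim (cm C u)) with
  | 0 => 1%:M
  | s.+1 => kermx (cd C s)
  end.
Definition bounds (C : cplx) (t : nat) := cd C t.

(* H_t(C) is isomorphic to N: a linear map on X_t which on Z_t is A-linear,
   maps Z_t onto N and has kernel B_t on Z_t, i.e. Z_t / B_t ~ N. *)
Definition homology_iso (C : cplx) (t : nat) N : Prop :=
  exists G : 'M[K]_(rdim (cm C t), rdim N),
  [/\ forall z : 'rV[K]_(rdim (cm C t)), (z <= cycles C t)%MS ->
        forall v, z *m re (cm C t) v *m G = z *m G *m re N v /\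
                  z *m ra (cm C t) v *m G = z *m G *m ra N v,
      row_full (cycles C t *m G) &
      forall z : 'rV[K]_(rdim (cm C t)), (z <= cycles C t)%MS ->
        (z *m G == 0) = (z <= bounds C t)%MS].

Definition homology_nonzero (C : cplx) (t : nat) : Prop :=
  ~~ (cycles C t <= bounds C t)%MS.

Definition is_sup (C : cplx) (s : nat) : Prop :=
  rdim (cm C s) != 0%N /\ forall t, (s < t)%N -> rdim (cm C t) = 0%N.
Definition is_hsup (C : cplx) (h : nat) : Prop :=
  homology_nonzero C h /\ forall t, (h < t)%N -> ~ homology_nonzero C t.

Definition fin_qpres M (C : cplx) : Prop :=
  [/\ proj_complex C, exists s, is_sup C s &
      exists nj : nat -> nat,
        (forall t, homology_iso C t (mpow M (nj t))) /\ exists t, nj t != 0%N].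

Definition qpd_value M (g : nat) : Prop :=
  exists C, fin_qpres M C /\ exists s h, [/\ is_sup C s, is_hsup C h & (g + h = s)%N].

Definition qpd_is M (q : nat) : Prop :=
  qpd_value M q /\ forall g, qpd_value M g -> (q <= g)%N.

Definition proj_res M (L : nat) : Prop :=
  exists C, [/\ proj_complex C, homology_iso C 0 M,
    forall t, (0 < t)%N -> ~ homology_nonzero C t &
    forall t, (L < t)%N -> rdim (cm C t) = 0%N].

Definition pd_is M (p : nat) : Prop :=
  proj_res M p /\ forall L, proj_res M L -> (p <= L)%N.

(* Uniserial module with basis b_0, ..., b_{len-1}, b_t at vertex vtx v t,
   alpha_{vtx v t} b_t = b_{t+1} (and b_len := 0): the module spanned by the
   paths of length < len starting at v. *)
Definition uniserial (v : 'I_n) (len : nat) : rep K n :=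
  @Rep K n len
    (fun w => \matrix_(a, b) (((a == b) && (vtx v a == w))%:R))
    (fun w => \matrix_(a, b) (((vtx v a == w) && (b == a.+1 :> nat))%:R)).

(* the path of length t from v lies in the (monomial) ideal generated by the
   rho_lambda iff it contains some rho_lambda as a subpath *)
Definition path_zero (v : 'I_n) (t : nat) : bool :=
  [exists p : 'I_t.+1, ((p + n <= t)%N && (vtx v p \in Delta))].

(* dim A e_v = number of nonzero paths starting at v (all paths of length
   >= 2n are zero when Delta is nonempty) *)
Definition dimP (v : 'I_n) : nat := #|[pred t : 'I_(2 * n) | ~~ path_zero v t]|.

(* P_v = A e_v  (basis: the nonzero paths from v) *)
Definition Pmod (v : 'I_n) : rep K n := uniserial v (dimP v).

(* L(v,k) = P_v / J^k P_v, for 1 <= k <= l(P_v) *)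
Definition Lmod (v : 'I_n) (k : nat) : rep K n := uniserial v k.

End Defs.

(* Main.v *)
Require Import Defs.
From mathcomp Require Import all_boot all_order all_algebra.
From mathcomp Require Import zify.
Set Implicit Arguments. Unset Strict Implicit. Unset Printing Implicit Defensive.
Import GRing.Theory.
Local Open Scope ring_scope.


Section Comb.
Variables (n : nat) (Delta : {set 'I_n}).

Lemma vtxS (v : 'I_n) t : vtx v t.+1 = ordS (vtx v t).
Proof. by []. Qed.

Lemma vtx0 (v : 'I_n) : vtx v 0 = v.
Proof. by []. Qed.

Lemma vtxD (v : 'I_n) s t : vtx v (s + t) = vtx (vtx v s) t.
Proof. by rewrite /vtx addnC iterD. Qed.

Lemma vtx_val (v : 'I_n) t : val (vtx v t) = ((v + t) %% n)%N.
Proof.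
elim: t => [|t IH]; first by rewrite addn0 modn_small ?ltn_ord.
rewrite vtxS /= IH addnS -[in RHS]addn1 -(modnDml (v + t) 1 n). by rewrite addn1.
Qed.

Lemma vtxSl (v : 'I_n) t : vtx (ordS v) t = vtx v t.+1.
Proof. by rewrite -addn1 addnC vtxD. Qed.

Lemma vtxn (v : 'I_n) t : vtx v (t + n) = vtx v t.
Proof. by apply: val_inj; rewrite !vtx_val addnA modnDr. Qed.

Lemma path_zeroS (v : 'I_n) t : path_zero Delta v t -> path_zero Delta v t.+1.
Proof.
case/existsP=> p /andP[h1 h2]; apply/existsP.
have hp : (p < t.+2)%N by apply: (leq_trans (ltn_ord p)).
by exists (Ordinal hp); rewrite /= h2 andbT; apply: (leq_trans h1).
Qed.

Lemma path_zero_mono (v : 'I_n) s t : (s <= t)%N -> path_zero Delta v s -> path_zero Delta v t.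
Proof.
move=> /subnKC <-; elim: (t - s)%N => [|d IH]; first by rewrite addn0.
by move=> h; rewrite addnS; apply: path_zeroS; apply: IH.
Qed.

Lemma path_zeroP (v : 'I_n) t :
  reflect (exists p, (p + n <= t)%N /\ vtx v p \in Delta) (path_zero Delta v t).
Proof.
apply: (iffP existsP).
  by case=> p /andP[h1 h2]; exists (val p).
case=> p [h1 h2].
have hp : (p < t.+1)%N by apply: leq_trans (leq_addr n p) _.
by exists (Ordinal hp); rewrite h1.
Qed.

Lemma path_zero_sub (v : 'I_n) a t :
  path_zero Delta (vtx v a) t -> path_zero Delta v (a + t).
Proof.
case/path_zeroP=> p [h1 h2]; apply/path_zeroP; exists (a + p)%N.
by rewrite vtxD h2 -addnA leq_add2l.
Qed.

Lemma path_zero_edge (v : 'I_n) t :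
  path_zero Delta v t.+1 -> ~~ path_zero Delta v t -> vtx v t.+1 \in Delta.
Proof.
case/path_zeroP=> p [h1 h2] h3.
have e : (p + n = t.+1)%N.
  apply/eqP; rewrite eqn_leq h1 /=; rewrite ltnNge; apply/negP=> h.
  by move/negP: h3; apply; apply/path_zeroP; exists p.
by rewrite -e vtxn.
Qed.

Lemma path_zero_n (v : 'I_n) : (0 < n)%N -> path_zero Delta v n = (v \in Delta).
Proof.
move=> n0; apply/path_zeroP/idP.
  case=> p [h1 h2]; have : p = 0%N by lia.
  by move=> e; move: h2; rewrite e.
by move=> h; exists 0%N.
Qed.

Hypothesis n2 : (2 <= n)%N.
Hypothesis DeltaN : Delta != set0.

Lemma path_zero_big (v : 'I_n) : path_zero Delta v (2 * n).-1.
Proof.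
case/set0Pn: DeltaN => lam hl.
apply/path_zeroP; exists (((lam + n) - v) %% n)%N; split.
  have := ltn_pmod ((lam + n) - v) (ltnW n2). lia.
suff -> : vtx v ((lam + n - v) %% n) = lam by [].
apply: val_inj.
rewrite vtx_val modnDmr.
have hv := ltn_ord v; have hl' := ltn_ord lam.
have -> : (v + (lam + n - v) = lam + n)%N by lia.
by rewrite modnDr modn_small.
Qed.

Lemma not_path_zero0 (v : 'I_n) : ~~ path_zero Delta v 0.
Proof. by apply/path_zeroP=> -[p [h _]]; lia. Qed.

Lemma dimP_spec (v : 'I_n) t : (t < dimP Delta v)%N = ~~ path_zero Delta v t.
Proof.
pose D := ex_minn (ex_intro (fun t => path_zero Delta v t) _ (path_zero_big v)).
have [hD hmin] : path_zero Delta v D /\ forall t, path_zero Delta v t -> (D <= t)%N.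
  by rewrite /D; case: ex_minnP.
have key : forall t, path_zero Delta v t = (D <= t)%N.
  move=> s; apply/idP/idP; first exact: hmin.
  by move=> h; apply: path_zero_mono h hD.
have Dle : (D <= (2 * n).-1)%N by apply: hmin; apply: path_zero_big.
have -> : dimP Delta v = D.
  rewrite /dimP.
  rewrite (eq_card (B := [pred s : 'I_(2 * n) | (s < D)%N])); last first.
    by move=> s; rewrite !inE key -ltnNge.
  have hD2 : (D <= 2 * n)%N by lia.
  rewrite -[X in _ = X](card_ord D).
  pose f := fun s : 'I_D => widen_ord hD2 s.
  have finj : injective f by move=> a b /(congr1 val) /= e; apply: val_inj.
  rewrite -(card_image finj); apply: eq_card => s; rewrite inE.
  apply/idP/imageP.
    move=> hs; exists (Ordinal hs) => //; exact: val_inj.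
  by case=> s' _ ->; rewrite /= ltn_ord.
by rewrite key -ltnNge.
Qed.

Lemma dimP_zero (v : 'I_n) : path_zero Delta v (dimP Delta v).
Proof. by have := dimP_spec v (dimP Delta v); rewrite ltnn => /esym/negbFE. Qed.

Lemma dimP_gt0 (v : 'I_n) : (0 < dimP Delta v)%N.
Proof. by rewrite dimP_spec not_path_zero0. Qed.

End Comb.


Section Mod.
Variables (K : fieldType) (n : nat) (Delta : {set 'I_n}).
Implicit Types (M N P : rep K n).

Lemma pathmS M (v : 'I_n) t : pathm M v t.+1 = pathm M v t *m ra M (vtx v t).
Proof.
elim: t v => [|t IH] v; first by rewrite /= mulmx1 mul1mx.
transitivity (ra M v *m pathm M (ordS v) t.+1); first by [].
by rewrite IH mulmxA vtxSl.
Qed.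

Lemma pathmD M (v : 'I_n) s t : pathm M v (s + t) = pathm M v s *m pathm M (vtx v s) t.
Proof.
elim: s v => [|s IH] v; first by rewrite /= mul1mx.
by rewrite addSn /= IH mulmxA vtxSl.
Qed.

Lemma hom_path M N (F : 'M[K]_(rdim M, rdim N)) v t :
  is_hom F -> pathm M v t *m F = F *m pathm N v t.
Proof.
move=> hF; elim: t v => [|t IH] v; first by rewrite /= mul1mx mulmx1.
by rewrite /= -mulmxA IH !mulmxA (proj2 (hF v)).
Qed.

Variable M : rep K n.
Hypothesis hM : is_mod Delta M.

Lemma re_idem v : re M v *m re M v = re M v.
Proof. by case: hM. Qed.
Lemma re_orth v w : v != w -> re M v *m re M w = 0.
Proof. by case: hM => _ h _ _ _; apply: h. Qed.
Lemma re_sum : \sum_v re M v = 1%:M.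
Proof. by case: hM. Qed.
Lemma ra_re v : ra M v = re M v *m ra M v *m re M (ordS v).
Proof. by case: hM. Qed.
Lemma ra_reR v : ra M v *m re M (ordS v) = ra M v.
Proof. by rewrite {1}ra_re -mulmxA re_idem -ra_re. Qed.
Lemma ra_reL v : re M v *m ra M v = ra M v.
Proof. by rewrite {1}ra_re !mulmxA re_idem -ra_re. Qed.

Lemma vec_re_orth (x : 'rV[K]_(rdim M)) v w :
  x *m re M v = x -> x *m re M w = if v == w then x else 0.
Proof.
move=> hx; case: eqP => [<-//|/eqP ne].
by rewrite -hx -mulmxA re_orth // mulmx0.
Qed.

Lemma vec_path_re (x : 'rV[K]_(rdim M)) v t :
  x *m re M v = x -> x *m pathm M v t *m re M (vtx v t) = x *m pathm M v t.
Proof.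
move=> hx; elim: t => [|t IH]; first by rewrite mulmx1.
by rewrite pathmS vtxS mulmxA -(mulmxA _ _ (re M _)) ra_reR.
Qed.

Lemma path_zero_mx v t : path_zero Delta v t -> pathm M v t = 0.
Proof.
case/path_zeroP=> p [h1 h2].
rewrite -(subnKC h1) pathmD pathmD.
by case: hM => _ _ _ _ /(_ _ h2) ->; rewrite mulmx0 mul0mx.
Qed.

End Mod.

Section Uni.
Variables (K : fieldType) (n : nat) (Delta : {set 'I_n}).
Variables (v : 'I_n) (len : nat).
Local Notation U := (@uniserial K n v len).

Definition ub (t : nat) : 'rV[K]_len := \row_b ((b == t :> nat)%:R).

Lemma ub_ge t : (len <= t)%N -> ub t = 0.
Proof.
move=> h; apply/rowP => b; rewrite !mxE.
by case: eqP => // e; have := ltn_ord b; rewrite e ltnNge h.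
Qed.

Lemma ub_mul m (A : 'M[K]_(len, m)) t (ht : (t < len)%N) : ub t *m A = row (Ordinal ht) A.
Proof.
rewrite rowE; congr (_ *m _); apply/rowP => b; rewrite !mxE /=.
by [].
Qed.

Lemma natr_and (a b : bool) : ((a && b)%:R : K) = a%:R * b%:R.
Proof. by case: a; case: b; rewrite /= ?mulr1 ?mulr0. Qed.

Lemma ub_ext m (A B : 'M[K]_(len, m)) :
  (forall t, (t < len)%N -> ub t *m A = ub t *m B) -> A = B.
Proof.
move=> h; apply/row_matrixP => i; have := h i (ltn_ord i).
rewrite !(ub_mul _ (ltn_ord i)).
by have -> : Ordinal (ltn_ord i) = i by apply: val_inj.
Qed.

Lemma ub_re t w : ub t *m re U w = (vtx v t == w)%:R *: ub t.
Proof.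
case: (ltnP t len) => ht; last by rewrite ub_ge // mul0mx scaler0.
rewrite (ub_mul _ ht); apply/rowP => c; rewrite !mxE natr_and /=.
by rewrite mulrC [Ordinal ht == c]eq_sym.
Qed.

Lemma ub_ra t w : ub t *m ra U w = (vtx v t == w)%:R *: ub t.+1.
Proof.
case: (ltnP t len) => ht; last first.
  by rewrite !ub_ge ?mul0mx ?scaler0 //; apply: leqW.
by rewrite (ub_mul _ ht); apply/rowP => c; rewrite !mxE natr_and /=.
Qed.

Lemma ub_path t s : ub t *m pathm U (vtx v t) s = ub (t + s).
Proof.
elim: s t => [|s IH] t; first by rewrite mulmx1 addn0.
rewrite [pathm _ _ _]/= mulmxA ub_ra eqxx scale1r -vtxS IH.
by rewrite addSnnS.
Qed.

Lemma ub_path_ne t s w : w != vtx v t -> ub t *m pathm U w s.+1 = 0.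
Proof.
move=> ne; rewrite [pathm _ _ _]/= mulmxA ub_ra eq_sym (negbTE ne).
by rewrite scale0r mul0mx.
Qed.

Hypotheses (n2 : (2 <= n)%N) (DeltaN : Delta != set0).

Lemma uni_is_mod : (len <= dimP Delta v)%N -> is_mod Delta U.
Proof.
move=> hlen; split.
- move=> w; apply: ub_ext => t _; rewrite mulmxA !ub_re -scalemxAl ub_re.
  by rewrite scalerA -natrM mulnb andbb.
- move=> w w' ne; apply: ub_ext => t _; rewrite mulmxA ub_re -scalemxAl ub_re.
  rewrite scalerA -natrM mulnb mulmx0.
  case: eqP => [e|]; last by rewrite scale0r.
  by rewrite e (negbTE ne) scale0r.
- apply: ub_ext => t _; rewrite mulmx_sumr mulmx1.
  rewrite (bigD1 (vtx v t)) //= ub_re eqxx scale1r big1 ?addr0 //.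
  by move=> w ne; rewrite ub_re eq_sym (negbTE ne) scale0r.
- move=> w; apply: ub_ext => t _; rewrite !mulmxA ub_re -!scalemxAl ub_ra.
  rewrite -scalemxAl ub_re scalerA scalerA -!natrM !mulnb.
  case: eqP => [<-|]; last by rewrite /= !scale0r.
  by rewrite /= -vtxS eqxx.
- move=> lam hlam; apply: ub_ext => t ht; rewrite mulmx0.
  case: (eqVneq lam (vtx v t)) => [e|ne]; last by have := @ub_path_ne t n.-1 lam ne; rewrite prednK //; apply: leq_trans n2.
  rewrite e ub_path ub_ge //.
  apply: leq_trans hlen _; rewrite leqNgt dimP_spec // negbK.
  by apply/path_zeroP; exists t; rewrite -e.
Qed.

End Uni.


Section UHom.
Variables (K : fieldType) (n : nat) (Delta : {set 'I_n}).
Variables (M : rep K n) (v : 'I_n) (len : nat).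

Definition uhom (x : 'rV[K]_(rdim M)) : 'M[K]_(len, rdim M) :=
  \matrix_(t, c) ((x *m pathm M v t) 0 c).

Variable x : 'rV[K]_(rdim M).
Hypotheses (hM : is_mod Delta M) (hx : x *m re M v = x) (hxz : x *m pathm M v len = 0).

Lemma ub_uhom t : ub K len t *m uhom x = x *m pathm M v t.
Proof.
case: (ltnP t len) => ht.
  by rewrite (ub_mul _ ht); apply/rowP => c; rewrite !mxE.
rewrite ub_ge // mul0mx -(subnKC ht) pathmD mulmxA hxz mul0mx //.
Qed.

Lemma vec_path_re_orth t w :
  x *m pathm M v t *m re M w = if vtx v t == w then x *m pathm M v t else 0.
Proof.
apply: (vec_re_orth hM). exact: (vec_path_re hM).
Qed.

Lemma uhom_hom : is_hom (M := uniserial K v len) (uhom x).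
Proof.
move=> w; split; apply: ub_ext => t _.
  rewrite mulmxA ub_re -scalemxAl /= ub_uhom mulmxA ub_uhom.
  rewrite vec_path_re_orth //; case: eqP => _; first by rewrite scale1r.
  by rewrite scale0r.
rewrite mulmxA ub_ra -scalemxAl /= ub_uhom mulmxA ub_uhom.
rewrite -(ra_reL hM) mulmxA vec_path_re_orth //.
case: eqP => [<-|_]; first by rewrite scale1r pathmS mulmxA.
by rewrite scale0r mul0mx.
Qed.

End UHom.

Section Proj.
Variables (K : fieldType) (n : nat) (Delta : {set 'I_n}).
Hypotheses (n2 : (2 <= n)%N) (DeltaN : Delta != set0).

Lemma uni_proj (v : 'I_n) : projective Delta (uniserial K v (dimP Delta v)).
Proof.
split; first exact: uni_is_mod.
move=> M N g f hM hN hg gfull hf.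
set x := ub K (dimP Delta v) 0 *m f.
have hx : x *m re N v = x.
  rewrite /x -mulmxA -(proj1 (hf v)) mulmxA ub_re.
  by rewrite eqxx scale1r.
case/row_fullP: gfull => B hB.
set y := x *m B *m re M v.
have hy : y *m re M v = y by rewrite /y -mulmxA (re_idem hM).
have hyg : y *m g = x by rewrite /y -mulmxA (proj1 (hg v)) mulmxA -(mulmxA x) hB mulmx1 hx.
have hyz : y *m pathm M v (dimP Delta v) = 0.
  by rewrite (path_zero_mx hM) ?mulmx0 //; apply: dimP_zero.
exists (uhom v (dimP Delta v) y); split; first exact: (uhom_hom hM hy hyz).
apply: ub_ext => t _; rewrite mulmxA ub_uhom //.
rewrite -mulmxA (hom_path _ _ hg) mulmxA hyg /x -mulmxA -(hom_path _ _ hf) /=.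
by rewrite mulmxA; have := ub_path K v (dimP Delta v) 0 t; rewrite vtx0 add0n => ->.
Qed.

End Proj.


Section Phi.
Variables (K : fieldType) (n : nat) (Delta : {set 'I_n}).
Implicit Types (M N P : rep K n).

Definition F1prop M := forall (u : 'I_n) (x : 'rV[K]_(rdim M)),
  x *m re M u = x -> x *m ra M u = 0 -> ordS u \notin Delta -> x = 0.
Definition F2prop M := forall (v : 'I_n) (y : 'rV[K]_(rdim M)) m,
  y *m re M (ordS v) = y -> y *m pathm M (ordS v) m = 0 ->
  (m < dimP Delta (ordS v))%N -> exists q, y = q *m ra M v.
Definition Phi M := F1prop M /\ F2prop M.

Lemma Phi_retract M P (s : 'M[K]_(rdim P, rdim M)) (p : 'M[K]_(rdim M, rdim P)) :
  is_hom s -> is_hom p -> s *m p = 1%:M -> Phi M -> Phi P.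
Proof.
move=> hs hp sp [F1 F2]; split.
  move=> u x hx hxa hu.
  have h : x *m s = 0.
    apply: (F1 u) => //; first by rewrite -mulmxA -(proj1 (hs u)) mulmxA hx.
    by rewrite -mulmxA -(proj2 (hs u)) mulmxA hxa mul0mx.
  by rewrite -[x]mulmx1 -sp mulmxA h mul0mx.
move=> v y m hy hyp hm.
have [q hq] : exists q, y *m s = q *m ra M v.
  apply: (F2 v _ m) => //; first by rewrite -mulmxA -(proj1 (hs _)) mulmxA hy.
  by rewrite -mulmxA -(hom_path _ _ hs) mulmxA hyp mul0mx.
exists (q *m p); rewrite -mulmxA -(proj2 (hp v)) mulmxA -hq.
by rewrite -mulmxA sp mulmx1.
Qed.

Definition dsum M N : rep K n :=
  @Rep K n (rdim M + rdim N)
    (fun v => block_mx (re M v) 0 0 (re N v))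
    (fun v => block_mx (ra M v) 0 0 (ra N v)).

Lemma mulmx_bdiag m1 m2 p1 p2 (A : 'M[K]_(m1,p1)) (B : 'M[K]_(m2,p2)) q1 q2
   (C : 'M[K]_(p1,q1)) (D : 'M[K]_(p2,q2)) :
  block_mx A 0 0 B *m block_mx C 0 0 D = block_mx (A *m C) 0 0 (B *m D).
Proof. by rewrite mulmx_block !mulmx0 !mul0mx !addr0 !add0r. Qed.

Lemma dsum_path M N v t :
  pathm (dsum M N) v t = block_mx (pathm M v t) 0 0 (pathm N v t).
Proof.
elim: t v => [|t IH] v; first by rewrite /= -scalar_mx_block.
by rewrite /= IH mulmx_bdiag.
Qed.

Lemma sum_bdiag (I : finType) m1 m2 (A : I -> 'M[K]_m1) (B : I -> 'M[K]_m2) :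
  \sum_i block_mx (A i) 0 0 (B i) = block_mx (\sum_i A i) 0 0 (\sum_i B i).
Proof.
elim/big_rec3: _ => [|i S1 S2 S3 _ ->]; first by rewrite block_mx0.
by rewrite add_block_mx !addr0.
Qed.

Lemma dsum_mod M N : is_mod Delta M -> is_mod Delta N -> is_mod Delta (dsum M N).
Proof.
move=> [a1 a2 a3 a4 a5] [b1 b2 b3 b4 b5]; split.
- by move=> v; rewrite /= mulmx_bdiag a1 b1.
- by move=> v w ne; rewrite /= mulmx_bdiag a2 // b2 // block_mx0.
- by rewrite /= sum_bdiag a3 b3 -scalar_mx_block.
- by move=> v; rewrite /= !mulmx_bdiag -a4 -b4.
- by move=> lam hl; rewrite dsum_path a5 // b5 // block_mx0.
Qed.

Lemma row_bdiag m p1 p2 q1 q2 (x1 : 'M[K]_(m,p1)) (x2 : 'M[K]_(m,p2))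
   (C : 'M[K]_(p1,q1)) (D : 'M[K]_(p2,q2)) :
  row_mx x1 x2 *m block_mx C 0 0 D = row_mx (x1 *m C) (x2 *m D).
Proof. by rewrite mul_row_block !mulmx0 addr0 add0r. Qed.

Lemma dsum_Phi M N : Phi M -> Phi N -> Phi (dsum M N).
Proof.
move=> [F1 F2] [G1 G2]; split.
  move=> u x hx hxa hu.
  have e := hsubmxK x.
  move: hx hxa; rewrite -{1 2 3}e /= !row_bdiag.
  case/eq_row_mx => h1 h2; rewrite -row_mx0; case/eq_row_mx => h3 h4.
  by rewrite -e (F1 u _ h1 h3 hu) (G1 u _ h2 h4 hu) row_mx0.
move=> v y m hy hyp hm.
have e := hsubmxK y.
move: hy hyp; rewrite -{1 2 3}e /= row_bdiag dsum_path row_bdiag.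
case/eq_row_mx => h1 h2; rewrite -row_mx0; case/eq_row_mx => h3 h4.
have [q1 e1] := F2 v _ m h1 h3 hm; have [q2 e2] := G2 v _ m h2 h4 hm.
by exists (row_mx q1 q2); rewrite /= row_bdiag -e1 -e2 e.
Qed.

Lemma dsum_hom M N P (a : 'M[K]_(rdim M, rdim P)) (b : 'M[K]_(rdim N, rdim P)) :
  is_hom a -> is_hom b -> is_hom (M := dsum M N) (col_mx a b).
Proof.
move=> ha hb v; rewrite /= !mul_block_col ?mulmx0 ?mul0mx ?addr0 ?add0r.
by rewrite !mul_col_mx (proj1 (ha v)) (proj2 (ha v)) (proj1 (hb v)) (proj2 (hb v)).
Qed.

Definition zrep : rep K n := @Rep K n 0 (fun _ => 0) (fun _ => 0).

Lemma zrep_mod : is_mod Delta zrep.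
Proof.
split=> *; by rewrite ?flatmx0 ?thinmx0 //; apply: flatmx0.
Qed.

Lemma zrep_Phi : Phi zrep.
Proof.
split; first by move=> *; apply: thinmx0.
by move=> v y *; exists 0; rewrite !thinmx0.
Qed.

End Phi.


Lemma sum_pick (K : fieldType) (I : finType) (F : I -> K) a0 :
  (forall a, a != a0 -> F a = 0) -> \sum_a F a = F a0.
Proof. by move=> h; rewrite (bigD1 a0) //= big1 ?addr0. Qed.

Lemma ord_neq m (a c : 'I_m) : a != c -> (val c == val a) = false.
Proof. by move=> h; apply/negbTE; rewrite eq_sym; exact: h. Qed.

Section UniPhi.
Variables (K : fieldType) (n : nat) (Delta : {set 'I_n}).
Hypotheses (n2 : (2 <= n)%N) (DeltaN : Delta != set0).
Variable (v : 'I_n).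
Local Notation D := (dimP Delta v).
Local Notation U := (uniserial K v D).

Lemma vec_ub (x : 'rV[K]_D) : x = \sum_(a < D) x 0 a *: ub K D a.
Proof.
apply/rowP => c; rewrite summxE (@sum_pick _ _ _ c).
  by rewrite !mxE eqxx mulr1.
by move=> a ne; rewrite !mxE ord_neq // mulr0.
Qed.

Lemma coef_sum (f : 'I_D -> K) (g : 'I_D -> nat) c :
  (\sum_(a < D) f a *: ub K D (g a)) 0 c = \sum_a f a * (val c == g a)%:R.
Proof. by rewrite summxE; apply: eq_bigr => a _; rewrite !mxE. Qed.

Lemma re_coef (x : 'rV[K]_D) w c : (x *m re U w) 0 c = x 0 c * (vtx v c == w)%:R.
Proof.
rewrite {1}(vec_ub x) mulmx_suml.
have -> : \sum_(a < D) x 0 a *: ub K D a *m re U w =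
          \sum_(a < D) (x 0 a * (vtx v a == w)%:R) *: ub K D a.
  by apply: eq_bigr => a _; rewrite -scalemxAl ub_re scalerA.
rewrite coef_sum (@sum_pick _ _ _ c) ?eqxx ?mulr1 //.
by move=> a ne; rewrite ord_neq // mulr0.
Qed.

Lemma uni_F1 : F1prop Delta U.
Proof.
move=> u x hx hxa hu; apply/rowP => c; rewrite [RHS]mxE.
have e1 := congr1 (fun z : 'rV[K]_D => z 0 c) hx; rewrite /= re_coef in e1.
case: (eqVneq (vtx v c) u) => [ec|ne]; last by rewrite -e1 (negbTE ne) mulr0.
case: (ltnP c.+1 D) => hc.
  have := congr1 (fun z : 'rV[K]_D => z 0 (Ordinal hc)) hxa.
  rewrite {1}(vec_ub x) mulmx_suml.
  have -> : \sum_(a < D) x 0 a *: ub K D a *m ra U u =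
          \sum_(a < D) (x 0 a * (vtx v a == u)%:R) *: ub K D a.+1.
    by apply: eq_bigr => a _; rewrite -scalemxAl ub_ra scalerA.
  rewrite coef_sum (@sum_pick _ _ _ c); last by move=> a ne; rewrite /= eqSS ord_neq // mulr0.
  by rewrite ec eqxx /= eqxx !mulr1 mxE.
exfalso; move/negP: hu; apply.
have ec1 : c.+1 = D by apply/eqP; rewrite eqn_leq hc ltn_ord.
rewrite -ec -vtxS; apply: path_zero_edge.
  by rewrite ec1; apply: dimP_zero.
by rewrite -dimP_spec.
Qed.

Lemma uni_F2 : F2prop Delta U.
Proof.
move=> w y m hy hyp hm.
have hyc : forall a : 'I_D, y 0 a = y 0 a * (vtx v a == ordS w)%:R.
  by move=> a; rewrite -re_coef hy.
have y0 : forall a : 'I_D, val a = 0%N -> y 0 a = 0.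
  move=> a a0; case: (eqVneq v (ordS w)) => [ev|ne]; last first.
    by rewrite hyc a0 vtx0 (negbTE ne) mulr0.
  have hmD : (m < D)%N by rewrite ev.
  have := congr1 (fun z : 'rV[K]_D => z 0 (Ordinal hmD)) hyp.
  rewrite {1}(vec_ub y) mulmx_suml.
  have -> : \sum_(b < D) y 0 b *: ub K D b *m pathm U (ordS w) m =
          \sum_(b < D) y 0 b *: ub K D (b + m).
    apply: eq_bigr => b _; rewrite -scalemxAl.
    case: (eqVneq (vtx v b) (ordS w)) => [eb|nb]; first by rewrite -eb ub_path.
    by rewrite hyc (negbTE nb) mulr0 !scale0r.
  rewrite coef_sum (@sum_pick _ _ _ a) /=; first by rewrite a0 add0n eqxx mulr1 mxE.
  move=> b ne; case: eqP => [e|]; last by rewrite mulr0.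
  move: e => /= e; exfalso; move/eqP: ne; apply; apply: val_inj; rewrite a0; change (nat_of_ord b = 0%N); lia.
exists (\sum_(a < D) y 0 a *: ub K D a.-1).
rewrite {1}(vec_ub y) mulmx_suml; apply: eq_bigr => a _.
rewrite -scalemxAl.
case: (posnP a) => [a0|apos]; first by rewrite y0 // !scale0r.
rewrite ub_ra prednK //.
case: (eqVneq (vtx v a.-1) w) => [e|ne]; first by rewrite /= mulr1n scale1r.
rewrite hyc.
have -> : (vtx v a == ordS w) = false.
  by rewrite -(prednK apos) vtxS (inj_eq (@ordS_inj _)) (negbTE ne).
by rewrite mulr0 !scale0r.
Qed.

Lemma uni_Phi : Phi Delta U.
Proof. split; [exact: uni_F1 | exact: uni_F2]. Qed.

End UniPhi.

Section Cover.
Variables (K : fieldType) (n : nat) (Delta : {set 'I_n}).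
Hypotheses (n2 : (2 <= n)%N) (DeltaN : Delta != set0).
Variable P : rep K n.
Hypothesis hP : is_mod Delta P.

Definition dl (j : 'I_(rdim P)) : 'rV[K]_(rdim P) := delta_mx 0 j.

Definition cT := {M : rep K n & 'M[K]_(rdim M, rdim P)}.

Definition cov_item (jw : 'I_(rdim P) * 'I_n) : cT :=
  existT (fun M : rep K n => 'M[K]_(rdim M, rdim P)) (uniserial K jw.2 (dimP Delta jw.2))
    (uhom jw.2 (dimP Delta jw.2) (dl jw.1 *m re P jw.2)).

Fixpoint cov (s : seq ('I_(rdim P) * 'I_n)) : cT :=
  match s with
  | [::] => existT (fun M : rep K n => 'M[K]_(rdim M, rdim P)) (zrep K n) 0
  | jw :: s' => existT (fun M : rep K n => 'M[K]_(rdim M, rdim P))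
       (dsum (projT1 (cov_item jw)) (projT1 (cov s')))
       (col_mx (projT2 (cov_item jw)) (projT2 (cov s')))
  end.

Lemma cov_item_props jw :
  [/\ is_mod Delta (projT1 (cov_item jw)), Phi Delta (projT1 (cov_item jw)),
      is_hom (projT2 (cov_item jw)) &
      (dl jw.1 *m re P jw.2 <= projT2 (cov_item jw))%MS].
Proof.
case: jw => j w /=.
have hx : dl j *m re P w *m re P w = dl j *m re P w.
  by rewrite -mulmxA (re_idem hP).
have hxz : dl j *m re P w *m pathm P w (dimP Delta w) = 0.
  by rewrite (path_zero_mx hP) ?mulmx0 //; apply: dimP_zero.
split.
- by apply: uni_is_mod.
- exact: uni_Phi.
- exact: (uhom_hom hP hx hxz).
- have := ub_uhom (len := dimP Delta w) hxz 0; rewrite mulmx1 => e; rewrite -{1}e; exact: submxMl.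
Qed.

Lemma cov_props s :
  [/\ is_mod Delta (projT1 (cov s)), Phi Delta (projT1 (cov s)),
      is_hom (projT2 (cov s)) &
      forall jw, jw \in s -> (dl jw.1 *m re P jw.2 <= projT2 (cov s))%MS].
Proof.
elim: s => [|jw s [IH1 IH2 IH3 IH4]] /=.
  split; [exact: zrep_mod | exact: zrep_Phi | | by []].
  by move=> v; split; rewrite [LHS]flatmx0 [RHS]flatmx0.
have [a1 a2 a3 a4] := cov_item_props jw.
split.
- exact: dsum_mod.
- exact: dsum_Phi.
- exact: dsum_hom.
- move=> jw'; rewrite inE => /orP [/eqP ->|h]; rewrite -addsmxE.
    exact: (submx_trans a4 (addsmxSl _ _)).
  exact: (submx_trans (IH4 _ h) (addsmxSr _ _)).
Qed.

Lemma cov_full : row_full (projT2 (cov (enum {: 'I_(rdim P) * 'I_n}))).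
Proof.
have [_ _ _ h] := cov_props (enum {: 'I_(rdim P) * 'I_n}).
rewrite -sub1mx; apply/row_subP => j; rewrite row1 -/(dl j).
rewrite -[dl j]mulmx1 -(re_sum hP) mulmx_sumr.
apply/summx_sub => w _.
by apply: (h (j, w)); rewrite mem_enum.
Qed.

End Cover.

Lemma proj_Phi (K : fieldType) (n : nat) (Delta : {set 'I_n}) (P : rep K n) :
  (2 <= n)%N -> Delta != set0 -> projective Delta P -> Phi Delta P.
Proof.
move=> n2 DeltaN [hP hl].
set c := cov Delta (P := P) (enum {: 'I_(rdim P) * 'I_n}).
have [c1 c2 c3 _] := cov_props n2 DeltaN hP (enum {: 'I_(rdim P) * 'I_n}).
have hid : is_hom (M := P) (N := P) 1%:M by move=> v; rewrite !mul1mx !mulmx1.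
have [h [hh1 hh2]] := hl _ _ _ _ c1 hP c3 (cov_full n2 DeltaN hP) hid.
exact: Phi_retract hh1 c3 hh2 c2.
Qed.


Section Lower.
Variables (K : fieldType) (n : nat) (Delta : {set 'I_n}).
Hypotheses (n2 : (2 <= n)%N) (DeltaN : Delta != set0).

Variables (C : cplx K n) (h : nat).
Hypothesis hC : proj_complex Delta C.

Local Notation X := (cm C h).
Local Notation Q := (cm C h.+1).
Local Notation d := (cd C h).
Local Notation Z := (cycles C h).

Lemma hX : is_mod Delta X.
Proof. by case: hC => /(_ h) []. Qed.
Lemma hQ : is_mod Delta Q.
Proof. by case: hC => /(_ h.+1) []. Qed.
Lemma hd : is_hom d.
Proof. by case: hC. Qed.

Lemma Z_re (z : 'rV[K]_(rdim X)) v : (z <= Z)%MS -> (z *m re X v <= Z)%MS /\ (z *m ra X v <= Z)%MS.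
Proof.
rewrite /cycles; case: h hC z => [|s] hC' z hz; first by rewrite !submx1.
have hs : is_hom (cd C s) by case: hC'.
move: hz; rewrite !sub_kermx => /eqP hz.
by rewrite -!mulmxA (proj1 (hs v)) (proj2 (hs v)) !mulmxA hz !mul0mx.
Qed.

Lemma Z_path (z : 'rV[K]_(rdim X)) v t : (z <= Z)%MS -> (z *m pathm X v t <= Z)%MS.
Proof.
elim: t z v => [|t IH] z v hz; first by rewrite mulmx1.
by rewrite [pathm _ _ _]/= mulmxA; apply: IH; case: (Z_re v hz).
Qed.

Variables (N : rep K n) (G : 'M[K]_(rdim X, rdim N)).
Hypothesis hG : forall z : 'rV[K]_(rdim X), (z <= Z)%MS ->
        forall v, z *m re X v *m G = z *m G *m re N v /\
                  z *m ra X v *m G = z *m G *m ra N v.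

Lemma G_path (z : 'rV[K]_(rdim X)) v t : (z <= Z)%MS ->
  z *m pathm X v t *m G = z *m G *m pathm N v t.
Proof.
elim: t z v => [|t IH] z v hz; first by rewrite !mulmx1.
rewrite [pathm X _ _]/= [pathm N _ _]/= mulmxA IH; last by case: (Z_re v hz).
by rewrite (proj2 (hG hz v)) mulmxA.
Qed.

Hypothesis hfull : row_full (Z *m G).
Hypothesis hker : forall z : 'rV[K]_(rdim X), (z <= Z)%MS ->
        (z *m G == 0) = (z <= bounds C h)%MS.
Hypothesis h2 : rdim (cm C h.+2) = 0%N.
Hypothesis hH : ~ homology_nonzero C h.+1.

Lemma d_inj (q : 'rV[K]_(rdim Q)) : q *m d = 0 -> q = 0.
Proof.
move=> hq.
have e0 : cd C h.+1 = 0.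
  apply/eqP; rewrite -mxrank_eq0 -leqn0.
  by apply: leq_trans (rank_leq_row _) _; rewrite h2.
move/negP: hH; rewrite negbK /bounds e0 /cycles => hk.
have : (q <= kermx d)%MS by rewrite sub_kermx hq.
by move=> /submx_trans /(_ hk) /submx0null.
Qed.

Variables (i : 'I_n) (k : nat) (e : 'rV[K]_(rdim N)).
Hypotheses (he1 : e *m re N i = e) (he2 : e *m pathm N i k = 0)
  (he3 : e *m pathm N i k.-1 != 0) (hk : (n <= k < dimP Delta i)%N).

Lemma no_short : False.
Proof.
have pX : projective Delta X by case: hC.
have pQ : projective Delta Q by case: hC.
have [F1X _] := proj_Phi n2 DeltaN pX.
have [_ F2Q] := proj_Phi n2 DeltaN pQ.
have hXm := hX; have hQm := hQ; have hdh := hd.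
set l := dimP Delta i.
have k1 : k = k.-1.+1 by rewrite prednK //; lia.
case/row_fullP: hfull => B hB.
set z := e *m B *m Z.
have hz : (z <= Z)%MS by apply: submxMl.
have hzG : z *m G = e by rewrite /z -!mulmxA hB mulmx1.
set z' := z *m re X i.
have hz' : (z' <= Z)%MS by case: (Z_re i hz).
have hz'G : z' *m G = e by rewrite /z' (proj1 (hG hz i)) hzG he1.
have hz're : z' *m re X i = z' by rewrite /z' -mulmxA (re_idem hXm).
set v := vtx i k.-1.
set u1 := z' *m pathm X i k.-1.
have hu1 : (u1 <= Z)%MS by apply: Z_path.
have hu1G : u1 *m G = e *m pathm N i k.-1 by rewrite /u1 G_path // hz'G.
have hu1re : u1 *m re X v = u1 by rewrite /u1 /v (vec_path_re hXm).
set y := u1 *m ra X v.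
have hy : (y <= Z)%MS by case: (Z_re v hu1).
have yE : y = z' *m pathm X i k by rewrite /y /u1 /v {3}k1 pathmS mulmxA.
have hyG : y *m G = 0.
  by rewrite /y (proj2 (hG hu1 v)) hu1G -mulmxA -pathmS -k1 he2.
have : (y <= bounds C h)%MS by rewrite -hker // hyG eqxx.
case/submxP => q0 hq0.
have ev : ordS v = vtx i k by rewrite /v -vtxS -k1.
set q := q0 *m re Q (ordS v).
have hyre : y *m re X (ordS v) = y by rewrite yE ev (vec_path_re hXm).
have hqd : q *m d = y.
  by rewrite /q -mulmxA (proj1 (hdh _)) mulmxA -hq0 hyre.
have hqre : q *m re Q (ordS v) = q by rewrite /q -mulmxA (re_idem hQm).
have hqp : q *m pathm Q (ordS v) (l - k) = 0.
  apply: d_inj; rewrite -mulmxA (hom_path _ _ hdh) mulmxA hqd yE ev.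
  rewrite -mulmxA -pathmD subnKC; last by case/andP: hk => _ /ltnW.
  by rewrite (path_zero_mx hXm) ?mulmx0 //; apply: dimP_zero.
have hlk : (l - k < dimP Delta (ordS v))%N.
  rewrite dimP_spec // ev; apply/negP => hpz.
  have : path_zero Delta i (k - n + (l - k)).
    have kn : (n <= k)%N by case/andP: hk.
    by apply: path_zero_sub; rewrite -(vtxn i) subnK.
  apply/negP; rewrite -dimP_spec //; rewrite -/l; lia.
have [q' hq'] := F2Q v q (l - k)%N hqre hqp hlk.
set q'' := q' *m re Q v.
have hq'' : q'' *m ra Q v = q by rewrite /q'' -mulmxA (ra_reL hQm).
set x := u1 - q'' *m d.
have hxre : x *m re X v = x.
  rewrite /x mulmxBl hu1re -mulmxA -(proj1 (hdh v)) mulmxA /q''.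
  by rewrite -[q' *m re Q v *m re Q v]mulmxA (re_idem hQm).
have hxra : x *m ra X v = 0.
  rewrite /x mulmxBl -/y -mulmxA -(proj2 (hdh v)) mulmxA hq'' hqd.
  by rewrite subrr.
have hnD : ordS v \notin Delta.
  have kn : (n <= k)%N by case/andP: hk.
  rewrite ev -(subnK kn) vtxn.
  apply/negP => hin.
  have : path_zero Delta i (k - n + n).
    by apply/path_zeroP; exists (k - n)%N.
  rewrite subnK; last by case/andP: hk.
  by apply/negP; rewrite -dimP_spec //; case/andP: hk.
have x0 := F1X v x hxre hxra hnD.
have : (u1 <= bounds C h)%MS.
  have -> : u1 = q'' *m d by apply/eqP; rewrite -subr_eq0 -/x x0.
  exact: submxMl.
rewrite -hker // hu1G; exact/negP.
Qed.

End Lower.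


Section Gen.
Variable K : fieldType.

Lemma vec_ubg len (x : 'rV[K]_len) : x = \sum_(a < len) x 0 a *: ub K len a.
Proof.
apply/rowP => c; rewrite summxE (@sum_pick _ _ _ c).
  by rewrite !mxE eqxx mulr1.
by move=> a ne; rewrite !mxE ord_neq // mulr0.
Qed.

Lemma ub_neq0 len t : (t < len)%N -> ub K len t != 0.
Proof.
move=> ht; apply/negP => /eqP /(congr1 (fun z : 'rV[K]_len => z 0 (Ordinal ht))).
by rewrite !mxE eqxx => /eqP; rewrite oner_eq0.
Qed.

Lemma ub_delta len (j : 'I_len) : ub K len j = delta_mx 0 j.
Proof. by apply/rowP => c; rewrite !mxE. Qed.

Variables (len1 len2 s : nat) (A : 'M[K]_(len1, len2)).
Hypothesis hA : forall a, ub K len1 a *m A = ub K len2 (s + a).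

Lemma shift_ker (r : 'rV[K]_len1) : r *m A = 0 ->
  forall a : 'I_len1, (s + a < len2)%N -> r 0 a = 0.
Proof.
move=> hr a ha.
have := congr1 (fun z : 'rV[K]_len2 => z 0 (Ordinal ha)) hr.
rewrite {1}(vec_ubg r) mulmx_suml summxE mxE.
rewrite (@sum_pick _ _ _ a).
  by rewrite -scalemxAl hA !mxE eqxx mulr1.
move=> b ne; rewrite -scalemxAl hA !mxE /= eqn_add2l ord_neq //.
by rewrite mulr0.
Qed.

Lemma shift_sub t : (s <= t)%N -> (t - s < len1)%N -> (ub K len2 t <= A)%MS.
Proof.
move=> h1 h2; have := hA (t - s); rewrite subnKC // => <-; exact: submxMl.
Qed.

End Gen.

Section Dims.
Variables (n : nat) (Delta : {set 'I_n}).
Hypotheses (n2 : (2 <= n)%N) (DeltaN : Delta != set0).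

Lemma dimP_eq (v : 'I_n) t : (0 < t)%N -> ~~ path_zero Delta v t.-1 ->
  path_zero Delta v t -> dimP Delta v = t.
Proof.
move=> t0 h1 h2; apply/eqP; rewrite eqn_leq.
rewrite leqNgt dimP_spec // h2 /=.
by rewrite -(prednK t0) dimP_spec.
Qed.

Variables (i : 'I_n) (k : nat).
Hypothesis hk : (n <= k < dimP Delta i)%N.
Local Notation l := (dimP Delta i).

Lemma w_in : vtx i l \in Delta.
Proof.
have l0 := dimP_gt0 n2 DeltaN i.
rewrite -(prednK l0); apply: path_zero_edge.
  by rewrite prednK //; apply: dimP_zero.
by rewrite -dimP_spec // prednK.
Qed.

Lemma D2_eq : dimP Delta (vtx i l) = n.
Proof.
apply: dimP_eq; first by lia.
  by apply/path_zeroP => -[p [hp _]]; lia.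
by rewrite path_zero_n ?w_in //; lia.
Qed.

Lemma D1_eq : dimP Delta (vtx i k) = (l - k + n)%N.
Proof.
have kn : (n <= k)%N by case/andP: hk.
have kl : (k < l)%N by case/andP: hk.
apply: dimP_eq; first by lia.
  apply/negP => hz.
  have : path_zero Delta i (k - n + (l - k + n).-1).
    by apply: path_zero_sub; rewrite -(vtxn i) subnK.
  apply/negP; rewrite -dimP_spec //; lia.
apply/path_zeroP; exists (l - k)%N; split; first by [].
by rewrite -vtxD subnKC ?w_in //; apply: ltnW.
Qed.

End Dims.

Lemma loewy_dim (K : fieldType) n (Delta : {set 'I_n}) (i : 'I_n) l :
  (2 <= n)%N -> Delta != set0 ->
  loewy_length (Pmod K Delta i) l -> l = dimP Delta i.
Proof.
move=> n2 DeltaN [l1 hz hnz].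
set D := dimP Delta i.
case: (ltngtP l D) => // h.
  have := hz i; move/(congr1 (fun M => ub K D 0 *m M)); rewrite mulmx0.
  have := ub_path K i D 0 l; rewrite vtx0 add0n => /= ->.
  by move/eqP; rewrite (negbTE (ub_neq0 _ h)).
have D1 : (1 <= D)%N by apply: dimP_gt0.
have [v /eqP hv] : exists v, pathm (Pmod K Delta i) v D != 0 by apply: hnz; rewrite D1 h.
exfalso; apply: hv; apply: ub_ext => t ht; rewrite mulmx0.
have D0 : D = D.-1.+1 by rewrite prednK.
case: (eqVneq v (vtx i t)) => [->|ne].
  by rewrite /= ub_path ub_ge // leq_addl.
by have := @ub_path_ne K n i D t D.-1 v ne; rewrite prednK.
Qed.


Section Mpow.
Variables (K : fieldType) (n : nat).

Lemma mxrow_re (M : rep K n) r (R : 'I_r -> 'rV[K]_(rdim M)) v :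
  \mxrow_j R j *m re (mpow M r) v = \mxrow_j (R j *m re M v).
Proof. by rewrite /= mul_mxrow_mxdiag. Qed.

Lemma mxrow_ra (M : rep K n) r (R : 'I_r -> 'rV[K]_(rdim M)) v :
  \mxrow_j R j *m ra (mpow M r) v = \mxrow_j (R j *m ra M v).
Proof. by rewrite /= mul_mxrow_mxdiag. Qed.

Lemma mxrow_path (M : rep K n) r (R : 'I_r -> 'rV[K]_(rdim M)) v t :
  \mxrow_j R j *m pathm (mpow M r) v t = \mxrow_j (R j *m pathm M v t).
Proof.
elim: t R v => [|t IH] R v.
  by rewrite mulmx1; apply: eq_mxrow => j; rewrite mulmx1.
rewrite [pathm (mpow M r) _ _]/= mulmxA mxrow_ra IH.
by apply: eq_mxrow => j; rewrite mulmxA.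
Qed.

Lemma mpow_elem (M : rep K n) r (x : 'rV[K]_(rdim M)) v t1 t2 :
  x *m re M v = x -> x *m pathm M v t1 = 0 -> x *m pathm M v t2 != 0 ->
  exists e : 'rV[K]_(rdim (mpow M r.+1)),
    [/\ e *m re (mpow M r.+1) v = e, e *m pathm (mpow M r.+1) v t1 = 0 &
        e *m pathm (mpow M r.+1) v t2 != 0].
Proof.
move=> h1 h2 h3.
pose R := fun j : 'I_r.+1 => if j == ord0 then x else 0.
exists (\mxrow_j R j); split.
- rewrite mxrow_re; apply: eq_mxrow => j; rewrite /R.
  by case: eqP => _; rewrite ?h1 ?mul0mx.
- rewrite mxrow_path -[RHS](mxrow0 (q_ := fun _ : 'I_r.+1 => rdim M)).
  by apply: eq_mxrow => j; rewrite /R; case: eqP => _; rewrite ?h2 ?mul0mx.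
- rewrite mxrow_path; apply/negP => /eqP /(congr1 (fun z => submxrow z ord0)).
  by rewrite mxrowK submxrow0 /R eqxx; apply/eqP.
Qed.

Variables (C : cplx K n) (t : nat).

Lemma HI_mpow1 (N : rep K n) : homology_iso C t N -> homology_iso C t (mpow N 1).
Proof.
case=> G [hc hf hk].
exists (\mxrow_(j < 1) G); split.
- move=> z hz v; rewrite !mul_mxrow.
  rewrite (mxrow_re (fun _ : 'I_1 => z *m G)) (mxrow_ra (fun _ : 'I_1 => z *m G)).
  by split; apply: eq_mxrow => j; have [] := hc z hz v.
- rewrite mul_mxrow -sub1mx; apply/row_subP => j.
  set y := row j 1%:M.
  case/row_fullP: hf => B hB.
  apply/submxP; exists (submxrow y ord0 *m B).
  rewrite mul_mxrow -[y in LHS]submxrowK; apply: eq_mxrow => j'.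
  by rewrite (ord1 j') -mulmxA hB mulmx1.
- move=> z hz; rewrite -hk // mul_mxrow.
  apply/eqP/eqP => [/(congr1 (fun w => submxrow w ord0))|->].
    by rewrite mxrowK submxrow0.
  by rewrite -(mxrow0 (q_ := fun _ : 'I_1 => rdim N)).
Qed.

Lemma HI_mpow0 (N : rep K n) : (cycles C t <= bounds C t)%MS ->
  homology_iso C t (mpow N 0).
Proof.
move=> hZ; exists 0; split.
- by move=> z _ v; rewrite !mulmx0 !mul0mx.
- by rewrite /row_full mulmx0 mxrank0 /= big_ord0.
- move=> z hz; rewrite mulmx0 eqxx; apply/esym; exact: submx_trans hz hZ.
Qed.

Lemma mpow0_triv (N : rep K n) : homology_iso C t (mpow N 0) -> ~ homology_nonzero C t.
Proof.
case=> G [_ _ hk]; rewrite /homology_nonzero; apply/negP; rewrite negbK.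
apply/row_subP => j; rewrite -hk ?row_sub //.
rewrite -mxrank_eq0 -leqn0.
by apply: leq_trans (rank_leq_col _) _; rewrite /= big_ord0.
Qed.

End Mpow.


Lemma zrep_proj (K : fieldType) n (Delta : {set 'I_n}) : projective Delta (zrep K n).
Proof.
split; first exact: zrep_mod.
move=> M N g f _ _ _ _ _; exists 0; split; last by rewrite [LHS]flatmx0 [RHS]flatmx0.
by move=> v; split; rewrite [LHS]flatmx0 [RHS]flatmx0.
Qed.

Section Cx.
Variables (K : fieldType) (n : nat) (Delta : {set 'I_n}).
Hypotheses (n2 : (2 <= n)%N) (DeltaN : Delta != set0).
Variables (i : 'I_n) (k : nat).
Hypothesis hk : (n <= k < dimP Delta i)%N.

Local Notation l := (dimP Delta i).
Local Notation u := (vtx i k).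
Local Notation w := (vtx i l).
Local Notation D1 := (dimP Delta u).
Local Notation D2 := (dimP Delta w).

Lemma kn : (n <= k)%N. Proof. by case/andP: hk. Qed.
Lemma kl : (k < l)%N. Proof. by case/andP: hk. Qed.
Lemma D1E : D1 = (l - k + n)%N. Proof. exact: (D1_eq n2 DeltaN hk). Qed.
Lemma D2E : D2 = n. Proof. exact: (D2_eq n2 DeltaN hk). Qed.

Definition d0 : 'M[K]_(D1, l) := uhom (M := Pmod K Delta i) u D1 (ub K l k).
Definition d1 : 'M[K]_(D2, D1) := uhom (M := Pmod K Delta u) w D2 (ub K D1 (l - k)).
Definition G0 : 'M[K]_(l, k) := uhom (M := Lmod K i k) i l (ub K k 0).

Lemma modPi : is_mod Delta (Pmod K Delta i). Proof. exact: uni_is_mod. Qed.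
Lemma modPu : is_mod Delta (Pmod K Delta u). Proof. exact: uni_is_mod. Qed.
Lemma modL : is_mod Delta (Lmod K i k).
Proof. apply: uni_is_mod => //; apply: ltnW; exact: kl. Qed.

Lemma d0_ub a : ub K D1 a *m d0 = ub K l (k + a).
Proof.
have hx : ub K l k *m re (Pmod K Delta i) u = ub K l k.
  by rewrite /Pmod ub_re eqxx scale1r.
have hz : ub K l k *m pathm (Pmod K Delta i) u D1 = 0.
  by rewrite /Pmod ub_path ub_ge // D1E; have := kl; lia.
have := ub_uhom hz a; rewrite /Pmod ub_path; exact.
Qed.

Lemma wE : vtx u (l - k) = w.
Proof. by rewrite -vtxD subnKC //; apply: ltnW; exact: kl. Qed.

Lemma d1_ub a : ub K D2 a *m d1 = ub K D1 (l - k + a).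
Proof.
have hx : ub K D1 (l - k) *m re (Pmod K Delta u) w = ub K D1 (l - k).
  by rewrite /Pmod ub_re wE eqxx scale1r.
have hz : ub K D1 (l - k) *m pathm (Pmod K Delta u) w D2 = 0.
  by rewrite /Pmod -wE ub_path ub_ge //= wE D1E D2E.
have e := ub_path K u D1 (l - k) a; rewrite wE in e.
have := ub_uhom hz a; rewrite /Pmod e; exact.
Qed.

Lemma G0_ub a : ub K l a *m G0 = ub K k a.
Proof.
have hx : ub K k 0 *m re (Lmod K i k) i = ub K k 0.
  by rewrite /Lmod ub_re eqxx scale1r.
have hz : ub K k 0 *m pathm (Lmod K i k) i l = 0.
  rewrite /Lmod; have := ub_path K i k 0 l; rewrite vtx0 add0n => ->.
  by rewrite ub_ge //; apply: ltnW; exact: kl.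
have := ub_uhom hz a; rewrite /Lmod.
by have := ub_path K i k 0 a; rewrite vtx0 add0n => ->.
Qed.

Lemma d0_hom : is_hom (M := Pmod K Delta u) (N := Pmod K Delta i) d0.
Proof.
apply: uhom_hom; first exact: modPi.
  by rewrite /Pmod ub_re eqxx scale1r.
rewrite /Pmod ub_path ub_ge //= D1E; have := kl; lia.
Qed.

Lemma d1_hom : is_hom (M := Pmod K Delta w) (N := Pmod K Delta u) d1.
Proof.
apply: uhom_hom; first exact: modPu.
  by rewrite /Pmod ub_re wE eqxx scale1r.
by rewrite /Pmod -wE ub_path ub_ge //= wE D1E D2E.
Qed.

Lemma G0_hom : is_hom (M := Pmod K Delta i) (N := Lmod K i k) G0.
Proof.
apply: uhom_hom; first exact: modL.
  by rewrite /Lmod ub_re eqxx scale1r.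
rewrite /Lmod; have := ub_path K i k 0 l; rewrite vtx0 add0n => ->.
by rewrite ub_ge //; apply: ltnW; exact: kl.
Qed.

Definition cmC (t : nat) : rep K n :=
  match t with
  | 0 => Pmod K Delta i
  | 1 => Pmod K Delta u
  | 2 => Pmod K Delta w
  | _ => zrep K n
  end.

Definition cdC (t : nat) : 'M[K]_(rdim (cmC t.+1), rdim (cmC t)) :=
  match t as t0 return 'M[K]_(rdim (cmC t0.+1), rdim (cmC t0)) with
  | 0 => d0
  | 1 => d1
  | _ => 0
  end.

Definition Cx : cplx K n := Cplx cdC.

Lemma d1d0 : d1 *m d0 = 0.
Proof.
apply: ub_ext => a _; rewrite mulmxA d1_ub d0_ub mulmx0 ub_ge //.
have := kl; lia.
Qed.

Lemma Cx_proj : proj_complex Delta Cx.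
Proof.
split.
- case=> [|[|[|t]]] /=; try exact: zrep_proj; by apply: uni_proj.
- case=> [|[|t]] /=; [exact: d0_hom | exact: d1_hom |].
  by move=> v; rewrite !mulmx0 !mul0mx.
- case=> [|[|t]] /=; [exact: d1d0 | by rewrite mul0mx | by rewrite mul0mx].
Qed.

Lemma d0G0 : d0 *m G0 = 0.
Proof.
apply: ub_ext => a _; rewrite mulmxA d0_ub G0_ub mulmx0 ub_ge //; exact: leq_addr.
Qed.

Lemma H0_ker (z : 'rV[K]_l) : (z *m G0 == 0) = (z <= d0)%MS.
Proof.
apply/eqP/idP => [hz|]; last first.
  by case/submxP => r ->; rewrite -mulmxA d0G0 mulmx0.
have h0 : forall a : 'I_l, (a < k)%N -> z 0 a = 0.
  move=> a ha; apply: (shift_ker (s := 0%N) (A := G0)) => //.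
  by move=> b; rewrite G0_ub.
rewrite (vec_ubg z); apply/summx_sub => a _.
case: (ltnP a k) => ha; first by rewrite h0 // scale0r sub0mx.
apply: scalemx_sub; apply: (shift_sub (s := k) (A := d0)) => //.
  exact: d0_ub.
rewrite D1E; have := ltn_ord a; lia.
Qed.

Lemma G0_full : row_full G0.
Proof.
rewrite -sub1mx; apply/row_subP => j; rewrite row1 -ub_delta.
have hj : (j < l)%N by apply: (leq_trans (ltn_ord j)); apply: ltnW; exact: kl.
by rewrite -(G0_ub j); apply: submxMl.
Qed.

Lemma H0_nz : ~~ (1%:M <= d0)%MS.
Proof.
apply/negP => h.
have : (ub K l 0 <= d0)%MS by apply: submx_trans h; apply: submx1.
rewrite -H0_ker G0_ub; apply/negP; apply: ub_neq0.
by have := kn; lia.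
Qed.

Lemma H1 : (kermx d0 <= d1)%MS.
Proof.
apply/row_subP => j.
have hr : row j (kermx d0) *m d0 = 0 by apply/sub_kermxP; apply: row_sub.
set r := row j (kermx d0) in hr *.
have h0 : forall a : 'I_D1, (k + a < l)%N -> r 0 a = 0.
  by move=> a ha; apply: (shift_ker (A := d0) (s := k)) => //; exact: d0_ub.
rewrite (vec_ubg r); apply/summx_sub => a _.
case: (ltnP (k + a) l) => ha; first by rewrite h0 // scale0r sub0mx.
apply: scalemx_sub; apply: (shift_sub (s := (l - k)%N) (A := d1)) => //.
- exact: d1_ub.
- by have := kl; lia.
- by rewrite D2E; have := ltn_ord a; have := D1E; lia.
Qed.

Lemma H2 : forall r : 'rV[K]_D2, r *m d1 = 0 -> r = 0.
Proof.
move=> r hr; apply/rowP => a; rewrite mxE.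
apply: (shift_ker (s := (l - k)%N) (d1_ub) hr).
by have := D1E; have := D2E; have := ltn_ord a; lia.
Qed.

Lemma Cx_H t : (0 < t)%N -> (cycles Cx t <= bounds Cx t)%MS.
Proof.
case: t => [//|[|[|t]]] _ /=.
- exact: H1.
- apply/row_subP => j.
  have : row j (kermx d1) *m d1 = 0 by apply/sub_kermxP; apply: row_sub.
  by move/H2 => ->; apply: sub0mx.
- by rewrite flatmx0 sub0mx.
Qed.

Lemma HI0L : homology_iso Cx 0 (Lmod K i k).
Proof.
exists G0; split.
- by move=> z _ v; rewrite /= -!mulmxA (proj1 (G0_hom v)) (proj2 (G0_hom v)).
- by rewrite /= mul1mx; exact: G0_full.
- by move=> z _; exact: H0_ker.
Qed.

Lemma is_sup2 : is_sup Cx 2.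
Proof.
split; first by rewrite /= D2E; apply/eqP; lia.
by case=> [|[|[|t]]].
Qed.

Lemma hsup0 : is_hsup Cx 0.
Proof.
split; first exact: H0_nz.
by move=> t ht; rewrite /homology_nonzero; apply/negP; rewrite negbK; apply: Cx_H.
Qed.

Lemma L_elem : [/\ ub K k 0 *m re (Lmod K i k) i = ub K k 0,
   ub K k 0 *m pathm (Lmod K i k) i k = 0 &
   ub K k 0 *m pathm (Lmod K i k) i k.-1 != 0].
Proof.
have e := ub_path K i k 0; rewrite vtx0 in e.
split.
- by rewrite /Lmod ub_re eqxx scale1r.
- by rewrite /Lmod e ub_ge.
- rewrite /Lmod e add0n; apply: ub_neq0 => /=; have := kn; lia.
Qed.

Lemma qpd_part : qpd_is Delta (Lmod K i k) 2.
Proof.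
split.
- exists Cx; split.
    split; [exact: Cx_proj | by exists 2%N; exact: is_sup2 |].
    exists (fun t => if t is 0 then 1%N else 0%N); split; last by exists 0%N.
    case=> [|t]; first by apply: HI_mpow1; exact: HI0L.
    by apply: HI_mpow0; apply: Cx_H.
  by exists 2%N, 0%N; split => //; [exact: is_sup2 | exact: hsup0].
move=> g [C' [[hC' _ [nj [hnj _]]] [s [h [hs hh hgs]]]]].
rewrite leqNgt; apply/negP => g2.
have h2 : rdim (cm C' h.+2) = 0%N by apply: (proj2 hs); lia.
have hH : ~ homology_nonzero C' h.+1 by apply: (proj2 hh); lia.
have := hnj h; case: (nj h) => [|r].
  by move/mpow0_triv; apply; exact: (proj1 hh).
case=> G [hc hf hkr].
have [x1 x2 x3] := L_elem.
have [e [e1 e2 e3]] := mpow_elem r x1 x2 x3.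
exact: (no_short n2 DeltaN hC' hc hf hkr h2 hH e1 e2 e3 hk).
Qed.

Lemma pd_part : pd_is Delta (Lmod K i k) 2.
Proof.
split.
- exists Cx; split.
  + exact: Cx_proj.
  + exact: HI0L.
  + by move=> t ht; rewrite /homology_nonzero; apply/negP; rewrite negbK; apply: Cx_H.
  + by case=> [|[|[|t]]].
move=> L' [C' [hC' hi hnz hz]].
rewrite leqNgt; apply/negP => hL.
case: hi => G [hc hf hkr].
have h2 : rdim (cm C' 2) = 0%N by apply: hz; lia.
have hH : ~ homology_nonzero C' 1 by apply: hnz.
have [x1 x2 x3] := L_elem.
exact: (no_short n2 DeltaN hC' hc hf hkr h2 hH x1 x2 x3 hk).
Qed.

End Cx.

Local Close Scope ring_scope.

Theorem lemma4p10 (K : fieldType) (n : nat) (Delta : {set 'I_n})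
    (i : 'I_n) (k l : nat) :
  (2 <= n)%N -> Delta != set0 ->
  @loewy_length K n (@Pmod K n Delta i) l ->
  (n <= k < l)%N ->
  @qpd_is K n Delta (@Lmod K n i k) 2 /\ @pd_is K n Delta (@Lmod K n i k) 2.
Proof.
move=> n2 DeltaN hl hkl.
have el := loewy_dim n2 DeltaN hl; rewrite el in hkl.
split; [exact: qpd_part | exact: pd_part].
Qed.
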